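(* Let $W:\mathcal{X}\to\mathcal{Y}$ be a channel with $\mathcal{Y}$ finite, $n\in\mathbb{N}$, $0<\delta\le\sqrt{n}\log|\mathcal{Y}|$, and let $u_1,\dots,u_N\in\mathcal{X}^n$ satisfy $1-\frac12\|W_{u_j}-W_{u_k}\|_1\le 2^{-3\delta\sqrt{n}}$ for all $j\ne k$. Then there is a subset $\mathcal{C}\subset[N]$ with $|\mathcal{C}|\ge N/\lceil n\log|\mathcal{Y}|\rceil$ such that $\{(u_j,\mathcal{E}_j=\mathcal{T}^\delta_{u_j}):j\in\mathcal{C}\}$ is an $(n,|\mathcal{C}|,\lambda_1,\lambda_2)$-DI code with \[ \lambda_1=2\exp\!\left(-\delta^2/36K(|\mathcal{Y}|)\right),\qquad \lambda_2=2\exp\!\left(-\delta^2/36K(|\mathcal{Y}|)\right)+3\exp\!\left(-\delta\sqrt{n}\right). \]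
   Context: A channel $W:\mathcal{X}\to\mathcal{Y}$ ($\mathcal{X}$ a measurable space) is a measurable map $x\mapsto W_x\in\mathcal{P}(\mathcal{Y})$; $W_{x^n}(y^n)=\prod_{i=1}^nW_{x_i}(y_i)$. Logarithms and exponentials are base 2. $\|P-Q\|_1=\sum_y|P(y)-Q(y)|$; $H$ is Shannon entropy. The conditional typical set is $\mathcal{T}^\delta_{x^n}=\{y^n\in\mathcal{Y}^n:|\log W_{x^n}(y^n)+H(W_{x^n})|\le\delta\sqrt{n}\}$ and $K(d)=(\log\max\{d,3\})^2$. An $(n,M,\lambda_1,\lambda_2)$-DI code indexed by a set $\mathcal{C}$ of size $M$ is a family $\{(u_j,\mathcal{E}_j):j\in\mathcal{C}\}$, $u_j\in\mathcal{X}^n$, $\mathcal{E}_j\subset\mathcal{Y}^n$, with $W_{u_j}(\mathcal{E}_j)\ge1-\lambda_1$ for all $j$ and $W_{u_j}(\mathcal{E}_k)\le\lambda_2$ for all $j\ne k$. *)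

(* Defs.v *)
From HB Require Import structures.
From mathcomp Require Import all_boot all_order all_algebra.
From mathcomp Require Import all_classical all_reals all_analysis.
Set Implicit Arguments. Unset Strict Implicit. Unset Printing Implicit Defensive.
Import Order.TTheory GRing.Theory Num.Theory.
Local Open Scope ring_scope.

Section Defs.
Variable R : realType.

Definition log2 (x : R) : R := ln x / ln 2.
Definition exp2 (x : R) : R := 2 `^ x.

Definition is_dist (T : finType) (P : T -> R) : Prop :=
  (forall t, 0 <= P t) /\ \sum_(t : T) P t = 1.

Definition entropy (T : finType) (P : T -> R) : R :=
  - \sum_(t : T) (if P t == 0 then 0 else P t * log2 (P t)).

Definition l1dist (T : finType) (P Q : T -> R) : R :=
  \sum_(t : T) `|P t - Q t|.

Definition probE (T : finType) (P : T -> R) (E : {set T}) : R :=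
  \sum_(t in E) P t.

(* a channel W : X -> P(Y), X a measurable space, Y finite; measurability of
   x |-> W_x in P(Y) (subset of R^Y) means each coordinate is measurable *)
Definition channel (d : measure_display) (X : measurableType d) (Y : finType)
  (W : X -> Y -> R) : Prop :=
  (forall x, is_dist (W x)) /\ (forall y, measurable_fun setT (fun x => W x y)).

Definition prodW (X : Type) (Y : finType) (W : X -> Y -> R) (n : nat)
  (xn : 'I_n -> X) : {ffun 'I_n -> Y} -> R :=
  fun yn => \prod_(i < n) W (xn i) (yn i).

(* conditional typical set; log W = -oo (not typical) when W_{x^n}(y^n) = 0 *)
Definition typset (X : Type) (Y : finType) (W : X -> Y -> R) (n : nat)
  (delta : R) (xn : 'I_n -> X) : {set {ffun 'I_n -> Y}} :=
  [set yn | (0 < prodW W xn yn) &&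
            (`| log2 (prodW W xn yn) + entropy (prodW W xn) |
               <= delta * Num.sqrt (n%:R))].

Definition Kfun (dd : R) : R := (log2 (Num.max dd 3)) ^+ 2.

Definition DIcode (X : Type) (Y : finType) (W : X -> Y -> R) (n N : nat)
  (C : {set 'I_N}) (u : 'I_N -> 'I_n -> X) (E : 'I_N -> {set {ffun 'I_n -> Y}})
  (M : nat) (l1 l2 : R) : Prop :=
  #|C| = M /\
  (forall j, j \in C -> probE (prodW W (u j)) (E j) >= 1 - l1) /\
  (forall j k, j \in C -> k \in C -> j != k -> probE (prodW W (u j)) (E k) <= l2).

End Defs.

(* Main.v *)
Require Import Defs.
From HB Require Import structures.
From mathcomp Require Import all_boot all_order all_algebra.
From mathcomp Require Import all_classical all_reals all_analysis.
From mathcomp Require Import ring lra.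
Import Order.TTheory GRing.Theory Num.Theory.
Local Open Scope ring_scope.


Section Num1.
Variable R : realType.
Implicit Types x l : R.

Lemma expR_inv_bound x : expR x * (1 - x) <= 1.
Proof.
have h := expR_ge1Dx (- x). have e := expRxMexpNx_1 x. have p := expR_gt0 x.
nra.
Qed.

Lemma exp_quad_neg x : x <= 0 -> expR x <= 1 + x + x ^+ 2.
Proof.
move=> hx.
have h := expR_inv_bound x. have p := expR_gt0 x. have g := expR_ge1Dx x.
nra.
Qed.

Lemma exp_quad_pos x : 0 <= x -> expR x <= 1 + x + x ^+ 2 * expR x.
Proof.
move=> hx.
have h := expR_inv_bound x. have p := expR_gt0 x. have g := expR_ge1Dx x.
nra.
Qed.

Lemma expR1_ge2 : 2 <= expR 1 :> R.
Proof. have := expR_ge1Dx (1 : R). lra. Qed.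

Lemma expR1_le3 : expR 1 <= 3 :> R.
Proof.
have h := expR_inv_bound (6^-1 : R).
have p := expR_gt0 (6^-1 : R).
have e : expR 1 = expR (6^-1 : R) ^+ 6.
  by rewrite -expRM_natl; congr expR; field.
have b : expR (6^-1 : R) <= 6/5.
  have q : (1 - 6^-1 : R) = 5/6 by field.
  rewrite q in h. nra.
rewrite e. set a := expR _ in b p *.
have : a ^+ 6 <= (6/5) ^+ 6 by rewrite lerXn2r // ?nnegrE; lra.
have : (6/5 : R) ^+ 6 <= 3. rewrite !exprS expr0. lra.
lra.
Qed.

Lemma ln_ge1 x : 3 <= x -> 1 <= ln x.
Proof.
move=> hx. have h3 := expR1_le3.
have : ln (expR 1) <= ln x.
  rewrite ler_ln ?posrE ?expR_gt0 //; lra.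
by rewrite expRK.
Qed.

Lemma ln2_le : ln 2 <= 9/10 :> R.
Proof.
have e : expR (9/10 : R) = expR (9/20) ^+ 2 by rewrite -expRM_natl; congr expR; field.
have g := expR_ge1Dx (9/20 : R).
have h : 2 <= expR (9/10 : R).
  rewrite e. nra.
have : ln 2 <= ln (expR (9/10 : R)).
  rewrite ler_ln ?posrE ?expR_gt0 //; lra.
by rewrite expRK.
Qed.

Lemma ln2_gt0 : 0 < ln 2 :> R.
Proof. by apply: ln_gt0; lra. Qed.

Lemma exp_tenth : expR (10^-1 : R) <= 10/9.
Proof.
have h := expR_inv_bound (10^-1 : R). have p := expR_gt0 (10^-1 : R).
have q : (1 - 10^-1 : R) = 9/10 by field. rewrite q in h. nra.
Qed.

Lemma sq_le_exp l : 0 <= l -> l ^+ 2 <= 400/81 * expR (9/20 * l).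
Proof.
move=> l0.
have g := expR_ge1Dx (9/40 * l - 1).
have e1 := expR1_ge2.
have eD : expR (9/40 * l) = expR (9/40 * l - 1) * expR 1.
  by rewrite -expRD; congr expR; ring.
have e2 : expR (9/20 * l) = expR (9/40 * l) ^+ 2.
  by rewrite -expRM_natl; congr expR; lra.
have p := expR_gt0 (9/40 * l - 1).
have h1 : 9/20 * l <= expR (9/40 * l) by rewrite eD; nra.
rewrite e2. have p2 := expR_gt0 (9/40 * l). nra.
Qed.

End Num1.


Section Single.
Variable R : realType.
Variable Y : finType.
Variable p : Y -> R.
Hypothesis hp0 : forall y, 0 <= p y.
Hypothesis hp1 : \sum_y p y = 1.
Variable D : R.
Hypothesis hD3 : 3 <= D.
Hypothesis hYD : (#|Y|%:R : R) <= D.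

Let L := ln D.
Definition ell y := - ln (p y).

Lemma p_le1 y : p y <= 1.
Proof.
rewrite -hp1 (bigD1 y) //= lerDl. by apply: sumr_ge0 => i _.
Qed.

Lemma ell_ge0 y : 0 <= ell y.
Proof. rewrite /ell oppr_ge0. apply: ln_le0. exact: p_le1. Qed.

Lemma L_ge1 : 1 <= L.
Proof. exact: ln_ge1. Qed.

Lemma p_expE y : 0 < p y -> p y = expR (- ell y).
Proof. by move=> h; rewrite /ell opprK lnK. Qed.

Lemma termB y t : 0 <= t -> 20 * t * L <= 1 ->
  p y * ell y ^+ 2 * expR (t * ell y) <= 40/9 * L ^+ 2 * p y + 400/81 / D.
Proof.
move=> t0 tL.
have L1 := L_ge1. have D0 : 0 < D. have h := hD3. lra.
have hc : 0 <= 400/81 / D by apply: divr_ge0; lra.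
have e0 := ell_ge0 y.
have := hp0 y; rewrite le0r => /orP[/eqP->|py].
  rewrite !mul0r mulr0 add0r. exact: hc.
case: (lerP (ell y) (2 * L)) => hl.
- have te : t * ell y <= 10^-1.
    have : t * ell y <= t * (2 * L) by apply: ler_wpM2l.
    lra.
  have ex : expR (t * ell y) <= 10/9.
    apply: le_trans (exp_tenth R). by rewrite ler_expR.
  have sq : ell y ^+ 2 <= 4 * L ^+ 2 by nra.
  have epos := expR_gt0 (t * ell y).
  have : p y * ell y ^+ 2 * expR (t * ell y) <= p y * (4 * L ^+ 2) * (10/9).
    apply: ler_pM => //.
    - apply: mulr_ge0; [exact: ltW | exact: sqr_ge0].
    - apply: ler_wpM2l => //; exact: ltW.
  lra.
- rewrite [in X in X * _ * _](p_expE y py).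
  have t20 : t <= 20^-1.
    have : 20 * t <= 20 * t * L by nra.
    lra.
  have key : expR (- ell y) * expR (t * ell y) <= expR (- L) * expR (- (9/20 * ell y)).
    rewrite -!expRD ler_expR. nra.
  have sq := @sq_le_exp R _ e0.
  have inv := expRxMexpNx_1 (9/20 * ell y).
  have eL : expR (- L) = D^-1 by rewrite expRN /L lnK // posrE.
  rewrite eL in key.
  have p1 := expR_gt0 (- ell y). have p2 := expR_gt0 (t * ell y).
  have p3 := expR_gt0 (- (9/20 * ell y)). have p4 := expR_gt0 (9/20 * ell y).
  have Di : 0 < D^-1 by rewrite invr_gt0.
  have : expR (- ell y) * ell y ^+ 2 * expR (t * ell y) <= 400/81 / D.
    have -> : expR (- ell y) * ell y ^+ 2 * expR (t * ell y)
       = ell y ^+ 2 * (expR (- ell y) * expR (t * ell y)) by ring.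
    apply: le_trans (_ : ell y ^+ 2 * (D^-1 * expR (- (9/20 * ell y))) <= _).
      apply: ler_wpM2l => //. exact: sqr_ge0.
    have -> : 400/81 / D = D^-1 * (400/81 * (expR (9/20 * ell y) * expR (- (9/20 * ell y)))).
      by rewrite inv; field; lra.
    have : ell y ^+ 2 * expR (- (9 / 20 * ell y)) <=
      400 / 81 * expR (9 / 20 * ell y) * expR (- (9 / 20 * ell y)).
      by apply: ler_wpM2r => //; apply: ltW.
    nra.
  have : 0 <= 40/9 * L ^+ 2 * p y.
    apply: mulr_ge0; last exact: ltW. nra.
  lra.
Qed.

Lemma sumB t : 0 <= t -> 20 * t * L <= 1 ->
  \sum_y p y * ell y ^+ 2 * expR (t * ell y) <= 10 * L ^+ 2.
Proof.
move=> t0 tL.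
apply: le_trans (_ : \sum_y (40/9 * L ^+ 2 * p y + 400/81 / D) <= _).
  by apply: ler_sum => y _; apply: termB.
rewrite big_split /= -mulr_sumr hp1 sumr_const -mulr_natr.
have L1 := L_ge1. have h3 := hD3. have hY := hYD.
have D0 : 0 < D by lra.
have : 400/81 / D * (#|Y|%:R) <= 400/81.
  rewrite mulrAC ler_pdivrMr //. nra.
nra.
Qed.
Definition Hn := \sum_y p y * ell y.

Lemma mgf s : 20 * `|s| * L <= 1 ->
  \sum_y p y * expR (s * ell y) <= expR (s * Hn + 10 * s ^+ 2 * L ^+ 2).
Proof.
move=> hs.
have [t [t0 [tL pt]]] : exists t, 0 <= t /\ 20 * t * L <= 1 /\ forall y,
   p y * expR (s * ell y) <= p y + s * (p y * ell y)
      + s ^+ 2 * (p y * ell y ^+ 2 * expR (t * ell y)).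
  case: (lerP s 0) => s0.
  - exists 0; split => //; split; first by rewrite mulr0 mul0r; lra.
    move=> y. rewrite mul0r expR0 mulr1.
    have e0 := ell_ge0 y. have py := hp0 y.
    have : s * ell y <= 0 by nra.
    move/exp_quad_neg => h.
    have := ler_wpM2l py h. nra.
  - exists s; split; first exact: ltW. split; first by rewrite -(gtr0_norm s0).
    move=> y.
    have e0 := ell_ge0 y. have py := hp0 y.
    have : 0 <= s * ell y by nra.
    move/exp_quad_pos => h.
    have := ler_wpM2l py h. nra.
apply: le_trans (_ : \sum_y (p y + s * (p y * ell y)
      + s ^+ 2 * (p y * ell y ^+ 2 * expR (t * ell y))) <= _).
  by apply: ler_sum => y _; apply: pt.
rewrite !big_split /= -!mulr_sumr hp1 -/Hn.
have B := sumB t t0 tL.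
have s2 : 0 <= s ^+ 2 := sqr_ge0 s.
apply: le_trans (expR_ge1Dx _).
have := ler_wpM2l s2 B. lra.
Qed.

Lemma Hn_ge0 : 0 <= Hn.
Proof. apply: sumr_ge0 => y _; apply: mulr_ge0; [exact: hp0 | exact: ell_ge0]. Qed.

Lemma cardY_gt0 : (0 < #|Y|)%N.
Proof.
rewrite lt0n; apply/negP => /eqP h.
have e : forall y : Y, false.
  move=> y. have := card0_eq h y. by rewrite inE.
move: hp1. rewrite big_pred0; last by move=> y; have := e y.
move=> /eqP; rewrite eq_sym oner_eq0 //.
Qed.

Lemma Hn_le : Hn <= ln (#|Y|%:R).
Proof.
have d0 : (0 : R) < #|Y|%:R by rewrite ltr0n cardY_gt0.
set d : R := #|Y|%:R in d0 *.
have : Hn - ln d <= \sum_y (d^-1 - p y).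
  rewrite /Hn.
  have -> : ln d = \sum_y p y * ln d by rewrite -mulr_suml hp1 mul1r.
  rewrite -sumrB; apply: ler_sum => y _.
  have := hp0 y; rewrite le0r => /orP[/eqP->|py].
    rewrite !mul0r; have : 0 < d^-1 by rewrite invr_gt0.
    lra.
  rewrite -mulrBr /ell.
  have e : - ln (p y) - ln d = ln ((p y * d)^-1).
    rewrite lnV ?posrE ?mulr_gt0 // lnM ?posrE //. ring.
  rewrite e.
  have pd : 0 < p y * d by rewrite mulr_gt0.
  have h := @le_ln1Dx R ((p y * d)^-1 - 1).
  have e2 : 1 + ((p y * d)^-1 - 1) = (p y * d)^-1 by ring.
  rewrite e2 in h.
  have : ln ((p y * d)^-1) <= (p y * d)^-1 - 1.
    apply: h. have : 0 < (p y * d)^-1 by rewrite invr_gt0. lra.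
  move=> h2. have := ler_wpM2l (ltW py) h2.
  have -> : p y * ((p y * d)^-1 - 1) = d^-1 - p y.
    field. by apply/andP; split; rewrite gt_eqF.
  done.
rewrite sumrB sumr_const -mulr_natr hp1 /d mulVf; last by rewrite gt_eqF.
lra.
Qed.

End Single.


Section Prod.
Variable R : realType.
Variable Y : finType.
Variable n : nat.
Variable q : 'I_n -> Y -> R.

Definition PP (f : {ffun 'I_n -> Y}) : R := \prod_i q i (f i).

Lemma sum_prod (F : 'I_n -> Y -> R) :
  \sum_(f : {ffun 'I_n -> Y}) \prod_i F i (f i) = \prod_i \sum_y F i y.
Proof. by rewrite bigA_distr_bigA. Qed.

Lemma PP_ge0 (hq0 : forall i y, 0 <= q i y) f : 0 <= PP f.
Proof. by apply: prodr_ge0 => i _; apply: hq0. Qed.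

Lemma PP_sum1 (hq1 : forall i, \sum_y q i y = 1) : \sum_f PP f = 1.
Proof. rewrite /PP sum_prod. by apply: big1 => i _; apply: hq1. Qed.

Lemma PP_pos_factor (hq0 : forall i y, 0 <= q i y) f i : 0 < PP f -> 0 < q i (f i).
Proof.
move=> h. rewrite lt0r hq0 andbT. apply/negP => /eqP e.
have : PP f == 0 by rewrite /PP; apply/prodf_eq0; exists i => //; rewrite e.
by rewrite gt_eqF.
Qed.

Lemma ln_PP (hq0 : forall i y, 0 <= q i y) f : 0 < PP f ->
  ln (PP f) = \sum_i ln (q i (f i)).
Proof.
move=> h.
have hp : forall i, 0 < q i (f i) by move=> i; apply: PP_pos_factor.
pose K := fun (a b : R) => 0 < a /\ ln a = b.
suff : K (\prod_i q i (f i)) (\sum_i ln (q i (f i))) by case.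
apply: (big_ind2 K).
- split; [exact: ltr01 | exact: ln1].
- move=> x1 x2 y1 y2 [h1 e1] [h2 e2]; split; first exact: mulr_gt0.
  by rewrite lnM ?posrE // e1 e2.
- by move=> i _; split.
Qed.

Lemma marginal (g : Y -> R) i (hq1 : forall i, \sum_y q i y = 1) :
  \sum_f PP f * g (f i) = \sum_y q i y * g y.
Proof.
pose F := fun j y => if j == i then q j y * g y else q j y.
have e : forall f : {ffun 'I_n -> Y}, PP f * g (f i) = \prod_j F j (f j).
  move=> f. rewrite /PP (bigD1 i) //= [RHS](bigD1 i) //= /F eqxx.
  rewrite mulrAC; congr (_ * _).
  by apply: eq_bigr => j /negbTE ->.
rewrite (eq_bigr _ (fun f _ => e f)) sum_prod (bigD1 i) //= /F eqxx.
rewrite [X in _ * X]big1 ?mulr1 // => j /negbTE ->. exact: hq1.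
Qed.

Lemma PP_ln_sum (hq0 : forall i y, 0 <= q i y) f :
  PP f * ln (PP f) = PP f * \sum_i ln (q i (f i)).
Proof.
have := PP_ge0 hq0 f; rewrite le0r => /orP[/eqP->|h]; first by rewrite !mul0r.
by rewrite ln_PP.
Qed.

Lemma ent_add (hq0 : forall i y, 0 <= q i y) (hq1 : forall i, \sum_y q i y = 1) :
  \sum_f PP f * ln (PP f) = - \sum_i Hn R Y (q i).
Proof.
rewrite (eq_bigr _ (fun f _ => PP_ln_sum hq0 f)).
under eq_bigr do rewrite mulr_sumr. rewrite exchange_big /= -sumrN.
apply: eq_bigr => i _.
rewrite (marginal (fun y => ln (q i y)) i hq1) /Hn -sumrN.
apply: eq_bigr => y _. by rewrite /ell mulrN opprK.
Qed.

Lemma mgf_prod s :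
  \sum_f PP f * expR (s * \sum_i ell R Y (q i) (f i))
  = \prod_i \sum_y q i y * expR (s * ell R Y (q i) y).
Proof.
rewrite -sum_prod. apply: eq_bigr => f _.
by rewrite mulr_sumr expR_sum /PP -big_split.
Qed.

End Prod.


Section TypeI.
Variable R : realType.
Variable Y : finType.
Variable n : nat.
Variable q : 'I_n -> Y -> R.
Hypothesis hq0 : forall i y, 0 <= q i y.
Hypothesis hq1 : forall i, \sum_y q i y = 1.
Variable D : R.
Hypothesis hD3 : 3 <= D.
Hypothesis hYD : (#|Y|%:R : R) <= D.

Let L := ln D.
Definition Sf (f : {ffun 'I_n -> Y}) := \sum_i ell R Y (q i) (f i).
Definition Hs := \sum_i Hn R Y (q i).

Lemma tail s c : 20 * `|s| * L <= 1 ->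
  \sum_f PP R Y n q f * expR (s * (Sf f - Hs) - c)
  <= expR (- c + n%:R * (10 * s ^+ 2 * L ^+ 2)).
Proof.
move=> hs.
have e : forall f, PP R Y n q f * expR (s * (Sf f - Hs) - c)
   = expR (- (s * Hs) - c) * (PP R Y n q f * expR (s * Sf f)).
  move=> f. rewrite mulrCA -expRD. congr (_ * expR _). ring.
rewrite (eq_bigr _ (fun f _ => e f)) -mulr_sumr mgf_prod.
have hq0' := hq0. have hq1' := hq1.
have B : \prod_i \sum_y q i y * expR (s * ell R Y (q i) y)
    <= \prod_i expR (s * Hn R Y (q i) + 10 * s ^+ 2 * L ^+ 2).
  apply: ler_prod => i _; apply/andP; split.
    by apply: sumr_ge0 => y _; apply: mulr_ge0 => //; apply: expR_ge0.
  exact: (@mgf R Y (q i) (hq0 i) (hq1 i) D hD3 hYD s hs).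
apply: le_trans (ler_wpM2l (expR_ge0 _) B) _.
rewrite -expR_sum -expRD ler_expR big_split /= -mulr_sumr sumr_const card_ord.
rewrite -/Hs mulr_natl. lra.
Qed.

Definition TT (delta : R) := [set f : {ffun 'I_n -> Y} | (0 < PP R Y n q f) &&
  (`|log2 (PP R Y n q f) + entropy (PP R Y n q)| <= delta * Num.sqrt (n%:R))].

Lemma entropy_PP : entropy (PP R Y n q) = Hs / ln 2.
Proof.
rewrite /entropy.
have e : forall f, (if PP R Y n q f == 0 then 0 else PP R Y n q f * log2 (PP R Y n q f))
   = PP R Y n q f * ln (PP R Y n q f) / ln 2.
  move=> f; case: eqP => [->|_]; first by rewrite !mul0r.
  by rewrite /log2 mulrA.
rewrite (eq_bigr _ (fun f _ => e f)) -mulr_suml ent_add // /Hs. by rewrite mulNr opprK.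
Qed.

Lemma log2_PP f : 0 < PP R Y n q f -> log2 (PP R Y n q f) = - Sf f / ln 2.
Proof.
move=> h. rewrite /log2 ln_PP // /Sf /ell sumrN opprK //.
Qed.

Lemma typeI delta : 0 < delta -> delta * ln 2 <= Num.sqrt (n%:R) * L -> (0 < n)%N ->
  1 - 2 * expR (- (delta ^+ 2 * ln 2 ^+ 2 / (40 * L ^+ 2)))
    <= probE (PP R Y n q) (TT delta).
Proof.
move=> d0 hd n0.
have hD := hD3. have L1 : 1 <= L by apply: ln_ge1.
have l2 := @ln2_gt0 R.
have n0' : (0 : R) < n%:R by rewrite ltr0n.
clearbody L.
set r := Num.sqrt (n%:R : R) in hd *.
have r0 : 0 < r by rewrite sqrtr_gt0.
have r2 : r ^+ 2 = n%:R by rewrite sqr_sqrtr // ltW.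
have er : r = Num.sqrt (n%:R) := erefl.
clearbody r.
set t := delta * r * ln 2.
have et : t = delta * r * ln 2 := erefl.
clearbody t.
have t0 : 0 < t by rewrite et !mulr_gt0.
set sg := t / (20 * n%:R * L ^+ 2).
have esg : sg = t / (20 * n%:R * L ^+ 2) := erefl.
clearbody sg.
have sg0 : 0 < sg by rewrite esg divr_gt0 // !mulr_gt0 //; lra.
have tn : t <= n%:R * L.
  have : delta * ln 2 * r <= r * L * r by apply: ler_wpM2r; [exact: ltW|].
  nra.
have hsg : 20 * `|sg| * L <= 1.
  rewrite gtr0_norm // esg.
  have -> : 20 * (t / (20 * n%:R * L ^+ 2)) * L = t / (n%:R * L) by field; nra.
  rewrite ler_pdivrMr; nra.
have hsg' : 20 * `|- sg| * L <= 1 by rewrite normrN.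
set E := expR (- (delta ^+ 2 * ln 2 ^+ 2 / (40 * L ^+ 2))).
have eE : expR (- (sg * t) + n%:R * (10 * sg ^+ 2 * L ^+ 2)) = E.
  rewrite /E esg et; congr expR. rewrite -r2. field. nra.
clearbody E.
have T1 := tail sg (sg * t) hsg. rewrite eE in T1.
have T2 := tail (- sg) (sg * t) hsg'. rewrite sqrrN eE in T2.
set P := PP R Y n q.
have P0 : forall f, 0 <= P f by move=> f; apply: PP_ge0.
have pw : forall f, (if f \notin TT delta then P f else 0)
   <= P f * expR (sg * (Sf f - Hs) - sg * t) + P f * expR (- sg * (Sf f - Hs) - sg * t).
  move=> f.
  have a1 := expR_gt0 (sg * (Sf f - Hs) - sg * t).
  have a2 := expR_gt0 (- sg * (Sf f - Hs) - sg * t).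
  have b1 : 0 <= P f * expR (sg * (Sf f - Hs) - sg * t) by apply: mulr_ge0 => //; exact: ltW.
  have b2 : 0 <= P f * expR (- sg * (Sf f - Hs) - sg * t) by apply: mulr_ge0 => //; exact: ltW.
  case: ifP => hT; last by lra.
  have := P0 f; rewrite le0r => /orP[/eqP->|pf]; first by lra.
  move: hT; rewrite inE pf /= -ltNge log2_PP // entropy_PP => hlt.
  have hlt' : t < `|Sf f - Hs|.
    have e2 : - Sf f / ln 2 + Hs / ln 2 = - (Sf f - Hs) / ln 2 by field; lra.
    rewrite e2 normrM normrN normfV (gtr0_norm l2) ltr_pdivlMr // in hlt.
    by rewrite et er.
  case: (lerP 0 (Sf f - Hs)) => hs.
  - rewrite ger0_norm // in hlt'.
    have : 1 <= expR (sg * (Sf f - Hs) - sg * t).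
      rewrite -expR0 ler_expR. nra.
    move=> h1. have := ler_wpM2l (P0 f) h1. lra.
  - rewrite ltr0_norm // in hlt'.
    have : 1 <= expR (- sg * (Sf f - Hs) - sg * t).
      rewrite -expR0 ler_expR. nra.
    move=> h1. have := ler_wpM2l (P0 f) h1. lra.
have S1 : \sum_f P f = 1 by apply: PP_sum1.
have split : \sum_f P f = probE P (TT delta) + \sum_(f | f \notin TT delta) P f.
  by rewrite /probE (bigID (fun f => f \in TT delta)).
have B : \sum_(f | f \notin TT delta) P f <= 2 * E.
  rewrite big_mkcond /=.
  apply: le_trans (ler_sum _ (fun f _ => pw f)) _.
  rewrite big_split /=. lra.
lra.
Qed.

End TypeI.


Section TypeII.
Variable R : realType.
Variable T : finType.

Lemma exp2E (x : R) : exp2 x = expR (x * ln 2).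
Proof. rewrite /exp2 /powR. have -> : (2 : R) == 0 = false by apply/eqP; lra. done. Qed.

Definition TS (P : T -> R) (a : R) :=
  [set f | (0 < P f) && (`|log2 (P f) + entropy P| <= a)].

Lemma ratio_bound (P Q : T -> R) a f : f \in TS P a -> f \in TS Q a ->
  `|entropy P - entropy Q| <= 1 -> P f <= exp2 (1 + 2 * a) * Q f.
Proof.
rewrite !inE => /andP[p0 hp] /andP[q0 hq] he.
have l2 := @ln2_gt0 R.
rewrite exp2E.
have hl : ln (P f) - ln (Q f) <= (1 + 2 * a) * ln 2.
  move: hp hq he; rewrite /log2 => hp hq he.
  have := ler_norml (ln (P f) / ln 2 + entropy P) a; rewrite hp => /esym/andP[h1 h2].
  have := ler_norml (ln (Q f) / ln 2 + entropy Q) a; rewrite hq => /esym/andP[h3 h4].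
  have := ler_norml (entropy P - entropy Q) 1; rewrite he => /esym/andP[h5 h6].
  have : ln (P f) / ln 2 - ln (Q f) / ln 2 <= 1 + 2 * a by lra.
  rewrite -mulrBl ler_pdivrMr //.
have : expR (ln (P f)) <= expR (ln (Q f) + (1 + 2 * a) * ln 2).
  rewrite ler_expR. lra.
by rewrite expRD lnK ?posrE // lnK ?posrE // mulrC.
Qed.


Lemma min_form (x y : R) : 0 <= x -> 0 <= y ->
  [/\ 0 <= (x + y - `|x - y|) / 2, x <= y -> (x + y - `|x - y|) / 2 = x
    & y < x -> (x + y - `|x - y|) / 2 = y].
Proof.
move=> x0 y0. case: (lerP x y) => h.
- split; try by []; try lra; move=> _; field.
- split; try by []; try lra; move=> _; field.
Qed.

Lemma typeII (P Q : T -> R) a :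
  (forall f, 0 <= P f) -> \sum_f P f = 1 ->
  (forall f, 0 <= Q f) -> \sum_f Q f = 1 -> 0 <= a ->
  `|entropy P - entropy Q| <= 1 ->
  1 - l1dist P Q / 2 <= exp2 (- (3 * a)) ->
  probE P (TS Q a) <= (1 - probE P (TS P a)) + 2 * exp2 (- a).
Proof.
move=> P0 P1 Q0 Q1 a0 he hl.
have E1 : 1 <= exp2 (1 + 2 * a).
  rewrite exp2E. have := @ln2_gt0 R. move=> l2. have := expR_ge1Dx ((1 + 2 * a) * ln 2). have : 0 <= (1 + 2 * a) * ln 2 by apply: mulr_ge0; lra. lra.
set E := exp2 (1 + 2 * a) in E1 *.
have eE : E = exp2 (1 + 2 * a) := erefl.
clearbody E.
pose m f := (P f + Q f - `|P f - Q f|) / 2.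
have m0 : forall f, 0 <= m f.
  move=> f; rewrite /m; have [] := min_form (P f) (Q f) (P0 f) (Q0 f); lra.
have pw : forall f, (if f \in TS Q a then (if f \in TS P a then P f else 0) else 0) <= E * m f.
  move=> f. case: ifP => hq; last by apply: mulr_ge0; [lra | exact: m0].
  case: ifP => hf; last by apply: mulr_ge0; [lra | exact: m0].
  have r := ratio_bound P Q a f hf hq he. rewrite -eE in r.
  have [_ h1 h2] := min_form (P f) (Q f) (P0 f) (Q0 f).
  rewrite /m. case: (boolP (P f <= Q f)) => c.
    rewrite h1 //. have := P0 f. nra.
  rewrite -ltNge in c. by rewrite h2.
have eL : l1dist P Q = \sum_f `|P f - Q f| := erefl.
rewrite eL in hl.
have sm : \sum_f m f = 1 - (\sum_f `|P f - Q f|) / 2.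
  by rewrite /m -mulr_suml sumrB big_split /= P1 Q1; field.
have pw2 : forall f, (if f \in TS Q a then (if f \notin TS P a then P f else 0) else 0)
    <= (if f \notin TS P a then P f else 0).
  move=> f. case: ifP => _; first exact: lexx.
  by case: ifP.
have eP : probE P (TS Q a) = \sum_f (if f \in TS Q a then (if f \in TS P a then P f else 0) else 0)
    + \sum_f (if f \in TS Q a then (if f \notin TS P a then P f else 0) else 0).
  rewrite -big_split /probE big_mkcond /=. apply: eq_bigr => f _.
  case: ifP => _; last by rewrite addr0.
  by case: ifP => _ /=; rewrite ?addr0 ?add0r.
have eP1 : \sum_f P f = probE P (TS P a) + \sum_f (if f \notin TS P a then P f else 0).
  by rewrite /probE (bigID (fun f => f \in TS P a)) /= -big_mkcond.
have A : \sum_f (if f \in TS Q a then (if f \in TS P a then P f else 0) else 0) <= E * (1 - (\sum_f `|P f - Q f|) / 2).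
  rewrite -sm mulr_sumr. exact: ler_sum.
have B : \sum_f (if f \in TS Q a then (if f \notin TS P a then P f else 0) else 0)
    <= \sum_f (if f \notin TS P a then P f else 0).
  by apply: ler_sum => f _; exact: pw2.
have C : E * (1 - (\sum_f `|P f - Q f|) / 2) <= 2 * exp2 (- a).
  apply: le_trans (_ : E * exp2 (- (3 * a)) <= _).
    by apply: ler_wpM2l => //; lra.
  rewrite eE !exp2E -expRD.
  have -> : (1 + 2 * a) * ln 2 + - (3 * a) * ln 2 = ln 2 + (- a * ln 2) by ring.
  by rewrite expRD lnK ?posrE.
rewrite eP. lra.
Qed.

End TypeII.


Lemma pigeon (N k : nat) (g : 'I_N -> 'I_k.+1) :
  exists b, (N <= k.+1 * #|[set j | g j == b]|)%N.
Proof.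
pose c := fun b => #|[set j | g j == b]|.
exists [arg max_(b > ord0) c b].
case: arg_maxnP => // b _ hb.
have e : N = (\sum_(b0 : 'I_k.+1) c b0)%N.
  rewrite -{1}(card_ord N) -sum1_card (partition_big g xpredT) //=.
  apply: eq_bigr => b0 _. rewrite /c -sum1_card. apply: eq_bigl => j. by rewrite inE.
apply: (leq_trans (eq_leq e)). apply: (@leq_trans (\sum_(b0 : 'I_k.+1) c b)).
  by apply: leq_sum => b0 _; apply: hb.
by rewrite sum_nat_const card_ord.
Qed.


Theorem theorem3 (R : realType) (d : measure_display) (X : measurableType d)
  (Y : finType) (W : X -> Y -> R) (n N : nat) (delta : R)
  (u : 'I_N -> 'I_n -> X) :
  channel W ->
  0 < delta -> delta <= Num.sqrt (n%:R) * log2 (#|Y|%:R : R) ->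
  (forall j k : 'I_N, j != k ->
     1 - l1dist (prodW W (u j)) (prodW W (u k)) / 2
       <= exp2 (- (3 * delta * Num.sqrt (n%:R)))) ->
  exists C : {set 'I_N},
    (N%:R / (Num.ceil (n%:R * log2 (#|Y|%:R : R)))%:~R <= (#|C|%:R : R)) /\
    DIcode W C u (fun j => typset W delta (u j)) #|C|
      (2 * exp2 (- (delta ^+ 2 / (36 * Kfun (#|Y|%:R : R)))))
      (2 * exp2 (- (delta ^+ 2 / (36 * Kfun (#|Y|%:R : R))))
       + 3 * exp2 (- (delta * Num.sqrt (n%:R)))).
Proof.
move=> [Wd Wm] d0 hd hTV.
have Wq0 : forall x y, 0 <= W x y by move=> x y; case: (Wd x) => h _; exact: h y.
have Wq1 : forall x, \sum_y W x y = 1 by move=> x; case: (Wd x).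
have l2 := @ln2_gt0 R.
have l29 := @ln2_le R.
have sq0 : 0 <= Num.sqrt (n%:R : R) := sqrtr_ge0 _.
have hp : 0 < Num.sqrt (n%:R : R) * log2 (#|Y|%:R : R) by apply: lt_le_trans hd.
have lg : 0 < log2 (#|Y|%:R : R).
  rewrite ltNge; apply/negP => h; have := mulr_ge0_le0 sq0 h; lra.
have sn : 0 < Num.sqrt (n%:R : R).
  rewrite lt0r sq0 andbT; apply/negP => /eqP h; rewrite h mul0r in hp; lra.
have n0 : (0 < n)%N by move: sn; rewrite sqrtr_gt0 ltr0n.
have lnd : 0 < ln (#|Y|%:R : R).
  have -> : ln (#|Y|%:R : R) = log2 (#|Y|%:R : R) * ln 2 by rewrite /log2; field; lra.
  exact: mulr_gt0.
have dY1 : 1 < (#|Y|%:R : R).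
  rewrite ltNge; apply/negP => h; have := ln_le0 h; lra.
have hD3 : 3 <= Num.max (#|Y|%:R : R) 3 by rewrite le_max lexx orbT.
have hYD : (#|Y|%:R : R) <= Num.max (#|Y|%:R : R) 3 by rewrite le_max lexx.
have lnD : ln (#|Y|%:R : R) <= ln (Num.max (#|Y|%:R : R) 3).
  rewrite ler_ln // posrE; lra.
have L1 : 1 <= ln (Num.max (#|Y|%:R : R) 3) by apply: ln_ge1.
have hdel : delta * ln 2 <= Num.sqrt (n%:R) * ln (Num.max (#|Y|%:R : R) 3).
  have : delta * ln 2 <= Num.sqrt (n%:R) * log2 (#|Y|%:R : R) * ln 2.
    by apply: ler_wpM2r => //; apply: ltW.
  have -> : Num.sqrt (n%:R) * log2 (#|Y|%:R : R) * ln 2 = Num.sqrt (n%:R) * ln (#|Y|%:R : R).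
    by rewrite /log2; field; lra.
  move=> h. apply: le_trans h _. by apply: ler_wpM2l.
have lam1 : expR (- (delta ^+ 2 * ln 2 ^+ 2 / (40 * ln (Num.max (#|Y|%:R : R) 3) ^+ 2)))
    <= exp2 (- (delta ^+ 2 / (36 * Kfun (#|Y|%:R : R)))).
  rewrite exp2E ler_expR /Kfun /log2.
  move: (ln (Num.max (#|Y|%:R : R) 3)) L1 => L L1.
rewrite mulNr lerN2.   have -> : delta ^+ 2 / (36 * (L / ln 2) ^+ 2) * ln 2 = (delta ^+ 2 * ln 2 ^+ 2 / L ^+ 2) * ln 2 / 36.
    field; apply/andP; split; apply/eqP; lra.
  have -> : delta ^+ 2 * ln 2 ^+ 2 / (40 * L ^+ 2) = (delta ^+ 2 * ln 2 ^+ 2 / L ^+ 2) / 40.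
    field; apply/eqP; lra.
  have : 0 <= delta ^+ 2 * ln 2 ^+ 2 / L ^+ 2.
    apply: divr_ge0; [apply: mulr_ge0; exact: sqr_ge0 | exact: sqr_ge0].
  nra.
move: (Num.max (#|Y|%:R : R) 3) hD3 hYD lnD L1 hdel lam1 => D hD3 hYD lnD L1 hdel lam1.
set lam := exp2 (- (delta ^+ 2 / (36 * Kfun (#|Y|%:R : R)))) in lam1 *.
have TI : forall j, 1 - 2 * lam <= probE (prodW W (u j)) (typset W delta (u j)).
  move=> j.
  have h := @typeI R Y n (fun i => W (u j i)) (fun i y => Wq0 (u j i) y) (fun i => Wq1 (u j i))
     D hD3 hYD delta d0 hdel n0.
  apply: le_trans h. lra.
have HB : forall j, 0 <= entropy (prodW W (u j)) <= n%:R * log2 (#|Y|%:R : R).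
  move=> j.
  have e : entropy (prodW W (u j)) = Hs R Y n (fun i => W (u j i)) / ln 2 :=
    @entropy_PP R Y n (fun i => W (u j i)) (fun i y => Wq0 (u j i) y) (fun i => Wq1 (u j i)).
  rewrite e.
  have h0 : 0 <= Hs R Y n (fun i => W (u j i)).
    apply: sumr_ge0 => i _. exact: (@Hn_ge0 R Y _ (Wq0 (u j i)) (Wq1 (u j i))).
  have h1 : Hs R Y n (fun i => W (u j i)) <= n%:R * ln (#|Y|%:R : R).
    apply: le_trans (_ : \sum_(i < n) ln (#|Y|%:R : R) <= _).
      apply: ler_sum => i _. exact: (@Hn_le R Y _ (Wq0 (u j i)) (Wq1 (u j i))).
    by rewrite sumr_const card_ord mulr_natl.
  have -> : n%:R * log2 (#|Y|%:R : R) = n%:R * ln (#|Y|%:R : R) / ln 2 by rewrite /log2 mulrA.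
  apply/andP; split.
    by apply: divr_ge0 => //; apply: ltW.
  by rewrite ler_pM2r // invr_gt0.
have M0 : 0 < n%:R * log2 (#|Y|%:R : R) by apply: mulr_gt0 => //; rewrite ltr0n.
have cpos : 0 < Num.ceil (n%:R * log2 (#|Y|%:R : R)) by rewrite ceil_gt0.
move: cpos (ceil_ge (n%:R * log2 (#|Y|%:R : R))).
case: (Num.ceil (n%:R * log2 (#|Y|%:R : R))) => [[|k]|k] // _ hMk.
rewrite -pmulrn in hMk *.
pose H2 j := entropy (prodW W (u j)).
pose bin j : 'I_k.+1 := inord (minn (Num.trunc (H2 j)) k).
have binE : forall j, (bin j : nat) = minn (Num.trunc (H2 j)) k.
  by move=> j; rewrite inordK // ltnS geq_minr.
have binB : forall j, ((bin j : nat)%:R <= H2 j) && (H2 j <= (bin j : nat)%:R + 1).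
  move=> j. rewrite binE.
  have /andP[h0 h1] := HB j.
  have /andP[t1 t2] := truncn_itv h0.
  case: (leqP (Num.trunc (H2 j)) k) => hk.
  - apply/andP; split => //. rewrite -natr1 in t2. exact: ltW.
  - apply/andP; split.
      apply: le_trans t1. by rewrite ler_nat ltnW.
    rewrite natr1. exact: le_trans h1 hMk.
have [b hb] := @pigeon N k bin.
exists [set j | bin j == b].
split.
  rewrite ler_pdivrMr ?ltr0n // mulrC -natrM ler_nat. exact: hb.
split; first by [].
split.
  move=> j _. exact: TI j.
move=> j1 j2; rewrite !inE => /eqP b1 /eqP b2 neq.
have hH : `|H2 j1 - H2 j2| <= 1.
  have := binB j1; have := binB j2; rewrite b1 b2 => /andP[a1 a2] /andP[a3 a4].
  rewrite ler_norml; apply/andP; split; lra.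
have P0 : forall j f, 0 <= prodW W (u j) f.
  move=> j f. exact: (@PP_ge0 R Y n (fun i => W (u j i)) (fun i y => Wq0 (u j i) y) f).
have P1 : forall j, \sum_f prodW W (u j) f = 1.
  move=> j. exact: (@PP_sum1 R Y n (fun i => W (u j i)) (fun i => Wq1 (u j i))).
have a0 : 0 <= delta * Num.sqrt (n%:R : R) by apply: mulr_ge0 => //; apply: ltW.
have hl := hTV j1 j2 neq. rewrite -mulrA in hl.
have h := @typeII R _ (prodW W (u j1)) (prodW W (u j2)) (delta * Num.sqrt (n%:R : R))
   (P0 j1) (P1 j1) (P0 j2) (P1 j2) a0 hH hl.
have t1 := TI j1.
have e0 : 0 <= exp2 (- (delta * Num.sqrt (n%:R : R))) by rewrite exp2E; apply: expR_ge0.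
apply: le_trans h _. lra.
Qed.
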